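(* For every $s\ge1$, the power series $E_s(\mathbf{x})=\Psi_s(\mathbf{x};0)=\sum_{\mathbf{k}\in\mathbb{Z}_{\ge0}^s}V_{\mathbf{k}}\frac{\mathbf{x}^{\mathbf{k}}}{\mathbf{k}!}$, where $V_{\mathbf{k}}$ is the number of $0$-dimensional faces of $\Gamma_{\mathbf{k}}$, satisfies $$\Big(\frac{\partial^s}{\partial x_1\cdots\partial x_s}-\prod_{i=1}^{s-1}\Big(\frac{\partial}{\partial x_i}+\frac{\partial}{\partial x_{i+1}}\Big)\Big)E_s(\mathbf{x})=0.$$
   Context: Ladder diagrams: $Q^+$ is the directed graph on $\mathbb{Z}_{\ge0}^2$ with edges $((i,j),(i,j+1))$ and $((i,j),(i+1,j))$. For a sequence $\mathbf{k}=(k_1,\dots,k_s)$ of positive integers with sum $n$, let $n_0=0$, $n_i=\sum_{j\le i}k_j$, $T_{\mathbf{k}}=\{(n_\ell,n-n_\ell):0\le\ell\le s\}$, and $\Gamma_{\mathbf{k}}$ the induced subgraph of $Q^+$ on $\{(a,b):a\le c,b\le d\text{ for some }(c,d)\in T_{\mathbf{k}}\}$. For nonnegative sequences, $\Gamma_{\mathbf{k}}$ is $\Gamma$ of the subsequence of positive entries (single vertex $(0,0)$ if all entries are zero). A positive path is a shortest directed path from $(0,0)$ to a vertex of $T_{\mathbf{k}}$; a face of $\Gamma_{\mathbf{k}}$ is a subgraph containing all of $T_{\mathbf{k}}$ that is a union of positive paths; its dimension is $\operatorname{rank}H_1$ of it as a 1-dimensional CW complex. $F_{\mathbf{k}}(t)=\sum_\gamma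 t^{\dim\gamma}$ over faces, and $\Psi_s(\mathbf{x};t)=\sum_{\mathbf{k}\in\mathbb{Z}_{\ge0}^s}F_{\mathbf{k}}(t)\frac{\mathbf{x}^{\mathbf{k}}}{\mathbf{k}!}$ with $\mathbf{x}^{\mathbf{k}}=x_1^{k_1}\cdots x_s^{k_s}$, $\mathbf{k}!=k_1!\cdots k_s!$. Thus $V_{\mathbf{k}}=F_{\mathbf{k}}(0)$, which by Theorem 1.1 equals the number of vertices of the corresponding Gelfand–Cetlin polytope. *)

(* Defs.v *)
From mathcomp Require Import all_boot all_order all_algebra.
Set Implicit Arguments. Unset Strict Implicit. Unset Printing Implicit Defensive.
Import GRing.Theory.
Local Open Scope ring_scope.

(* Vertices of Q^+ inside the box [0,n]x[0,n]; every Gamma_k with sum k = n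
   lives in this box. *)
Definition vtx (n : nat) := ('I_n.+1 * 'I_n.+1)%type.
Definition pt (n a b : nat) : vtx n := (inord a, inord b).

Definition psum (k : seq nat) (l : nat) : nat := sumn (take l k).

Definition Tset (k : seq nat) : {set vtx (sumn k)} :=
  [set pt (sumn k) (psum k l) (sumn k - psum k l) | l : 'I_(size k).+1].

(* A directed path in Q^+ from (0,0) whose endpoint lies in T_k has length
   exactly n (all points of T_k lie on a + b = n); it is encoded by its word of
   n steps: false = step (i,j)->(i+1,j), true = step (i,j)->(i,j+1). *)
Definition pos (n : nat) (w : n.-tuple bool) (j : nat) : vtx n :=
  pt n (count negb (take j w)) (count id (take j w)).

Definition pathV (n : nat) (w : n.-tuple bool) : {set vtx n} :=
  [set pos w j | j : 'I_n.+1].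
Definition pathE (n : nat) (w : n.-tuple bool) : {set (vtx n * vtx n)} :=
  [set (pos w j, pos w j.+1) | j : 'I_n].

Definition pospath (k : seq nat) (w : (sumn k).-tuple bool) : bool :=
  pos w (sumn k) \in Tset k.

Definition subgraph (n : nat) := ({set vtx n} * {set (vtx n * vtx n)})%type.

Definition is_face (k : seq nat) (H : subgraph (sumn k)) : bool :=
  [exists P : {set (sumn k).-tuple bool},
    [&& [forall w in P, @pospath k w],
        H == (\bigcup_(w in P) pathV w, \bigcup_(w in P) pathE w) &
        Tset k \subset H.1]].

(* cellular boundary map d_1 : Q^{E(H)} -> Q^{V} (row-vector convention),
   d_1(u -> v) = v - u *)
Definition bdry (n : nat) (H : subgraph n) : 'M[rat]_(#|H.2|, #|{: vtx n}|) :=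
  \matrix_(i, j)
    (((enum_val j == (enum_val i).2)%:R : rat) - (enum_val j == (enum_val i).1)%:R).

(* dim = rank H_1 of the 1-dimensional CW complex H = dim_Q ker d_1
   (there are no 2-cells, so H_1 = ker d_1; rank over Z = dim over Q) *)
Definition face_dim (n : nat) (H : subgraph n) : nat := \rank (kermx (bdry H)).

Definition Vcount (k : seq nat) : nat :=
  #|[set H : subgraph (sumn k) | @is_face k H && (face_dim H == 0%N)]|.

(* A series is its coefficient function: f m = coefficient of x^m. *)
Definition mindex (s : nat) := {ffun 'I_s -> nat}.
Definition series (s : nat) := mindex s -> rat.

Definition incr (s : nat) (m : mindex s) (i : 'I_s) : mindex s :=
  [ffun j => (m j + (j == i))%N].

Definition pderiv (s : nat) (i : 'I_s) (f : series s) : series s :=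
  fun m => ((m i).+1)%:R * f (incr m i).

Definition sadd (s : nat) (f g : series s) : series s := fun m => f m + g m.

Definition Eseries (s : nat) : series s :=
  fun m => (Vcount [seq m i | i <- enum 'I_s])%:R / (\prod_(i < s) (m i)`!)%:R.

Definition Dall (s : nat) (f : series s.+1) : series s.+1 :=
  foldr (@pderiv s.+1) f (enum 'I_s.+1).

(* prod_{i=1}^{s} (d/dx_i + d/dx_{i+1})  (for s.+1 variables, 0-indexed) *)
Definition Dprod (s : nat) (f : series s.+1) : series s.+1 :=
  foldr (fun (i : 'I_s) g =>
           sadd (pderiv (widen_ord (leqnSn s) i) g) (pderiv (lift ord0 i) g))
        f (enum 'I_s).

(* Main.v *)
Require Import Defs.
From mathcomp Require Import all_boot all_order all_algebra.
From mathcomp Require Import zify.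
From mathcomp.algebra_tactics Require Import ring.
From Stdlib Require Import FunctionalExtensionality.
Set Implicit Arguments. Unset Strict Implicit. Unset Printing Implicit Defensive.
Import GRing.Theory Num.Theory.

Definition ps (w : seq bool) (j : nat) : nat * nat :=
  (count negb (take j w), count id (take j w)).

Lemma count_negb_id (u : seq bool) : count negb u + count id u = size u.
Proof. by elim: u => //= -[] u IH /=; rewrite ?add0n ?add1n ?addn0 -?IH ?addSn ?addnS. Qed.

Lemma ps_sum w j : j <= size w -> (ps w j).1 + (ps w j).2 = j.
Proof. by move=> hj; rewrite /ps /= count_negb_id size_takel. Qed.

Lemma ps0 w : ps w 0 = (0, 0)%N.
Proof. by rewrite /ps take0. Qed.

Lemma ps_step w j : j < size w ->
  ps w j.+1 = if nth false w j then ((ps w j).1, (ps w j).2.+1)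
              else ((ps w j).1.+1, (ps w j).2).
Proof.
move=> hj; rewrite /ps (take_nth false hj) -cats1 !count_cat /=.
by case: (nth false w j); rewrite /= ?addn0 ?addn1.
Qed.

Lemma ps_take w i j : i <= j -> ps (take j w) i = ps w i.
Proof. by move=> hij; rewrite /ps take_takel. Qed.

Lemma ps_take_eq w1 w2 i j : take j w1 = take j w2 -> i <= j -> ps w1 i = ps w2 i.
Proof. by move=> e hij; rewrite -(ps_take w1 hij) -(ps_take w2 hij) e. Qed.

Lemma take_eq_ps w1 w2 j : j <= size w1 -> j <= size w2 ->
  (forall i, i <= j -> ps w1 i = ps w2 i) -> take j w1 = take j w2.
Proof.
move=> h1 h2 e; apply: (eq_from_nth (x0 := false)); first by rewrite !size_takel.
move=> i; rewrite size_takel // => hi; rewrite !nth_take //.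
have := e i.+1 hi; rewrite (ps_step (leq_trans hi h1)) (ps_step (leq_trans hi h2)).
rewrite (e i (ltnW hi)).
by case: (nth false w1 i); case: (nth false w2 i) => // -[] /eqP; rewrite ?eqSS ?(gtn_eqF (ltnSn _)) ?(ltn_eqF (ltnSn _)).
Qed.

Lemma pos_ps n (w : n.-tuple bool) j : pos w j = pt n (ps w j).1 (ps w j).2.
Proof. by []. Qed.

Definition lev n (v : vtx n) : nat := (v.1 : nat) + (v.2 : nat).

Lemma ps_le n (w : n.-tuple bool) j : j <= n -> ((ps w j).1 <= j) && ((ps w j).2 <= j).
Proof.
move=> hj; have := ps_sum (w := w) (j := j); rewrite size_tuple => /(_ hj).
case: (ps w j) => a b /= <-.
by rewrite leq_addr leq_addl.
Qed.

Lemma pt_val n a b : a <= n -> b <= n -> ((pt n a b).1 : nat) = a /\ ((pt n a b).2 : nat) = b.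
Proof. by move=> ha hb; rewrite /pt /= !inordK. Qed.

Lemma pt_inj n a b a' b' : a <= n -> b <= n -> a' <= n -> b' <= n ->
  pt n a b = pt n a' b' -> a = a' /\ b = b'.
Proof.
move=> ha hb ha' hb' e.
have [e1 e2] := pt_val ha hb; have [e1' e2'] := pt_val ha' hb'.
by split; [rewrite -e1 -e1' e | rewrite -e2 -e2' e].
Qed.

Lemma lev_pos n (w : n.-tuple bool) j : j <= n -> lev (pos w j) = j.
Proof.
move=> hj; have /andP[h1 h2] := ps_le w hj.
rewrite /lev pos_ps; have [-> ->] := pt_val (leq_trans h1 hj) (leq_trans h2 hj).
by apply: ps_sum; rewrite size_tuple.
Qed.

Lemma pos_eq n (w1 w2 : n.-tuple bool) j1 j2 : j1 <= n -> j2 <= n ->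
  pos w1 j1 = pos w2 j2 -> ps w1 j1 = ps w2 j2 /\ j1 = j2.
Proof.
move=> h1 h2 e; have jj : j1 = j2 by rewrite -(lev_pos w1 h1) -(lev_pos w2 h2) e.
split => //.
have /andP[a1 b1] := ps_le w1 h1; have /andP[a2 b2] := ps_le w2 h2.
have [] := pt_inj (leq_trans a1 h1) (leq_trans b1 h1) (leq_trans a2 h2) (leq_trans b2 h2) e.
by case: (ps w1 j1) => ? ?; case: (ps w2 j2) => ? ? /= -> ->.
Qed.

Definition Phi n (P : {set n.-tuple bool}) : subgraph n :=
  (\bigcup_(w in P) pathV w, \bigcup_(w in P) pathE w).

Definition pref n (P : {set n.-tuple bool}) : bool :=
  [forall w1 in P, forall w2 in P, forall j : 'I_n.+1,
     (ps w1 j == ps w2 j) ==> (take j w1 == take j w2)].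

Lemma prefE n (P : {set n.-tuple bool}) w1 w2 j : pref P -> w1 \in P -> w2 \in P ->
  j <= n -> ps w1 j = ps w2 j -> take j w1 = take j w2.
Proof.
move=> pre h1 h2 hj e.
move/forallP: pre => /(_ w1); rewrite h1 /= => /forallP /(_ w2); rewrite h2 /=.
move=> /forallP /(_ (Ordinal (n := n.+1) (m := j) hj)) /=.
by rewrite e eqxx => /eqP.
Qed.

Lemma prefI n (P : {set n.-tuple bool}) :
  (forall w1 w2 j, w1 \in P -> w2 \in P -> j <= n -> ps w1 j = ps w2 j -> take j w1 = take j w2) ->
  pref P.
Proof.
move=> h; apply/forallP => w1; apply/implyP => h1; apply/forallP => w2; apply/implyP => h2.
apply/forallP => j; apply/implyP => /eqP e; apply/eqP; apply: h => //.
by rewrite -ltnS ltn_ord.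
Qed.

Lemma PhiE n (P : {set n.-tuple bool}) e : e \in (Phi P).2 ->
  exists w, exists j : 'I_n, w \in P /\ e = (pos w j, pos w j.+1).
Proof. by case/bigcupP => w wP /imsetP [j _ ->]; exists w, j. Qed.

Lemma PhiE_lev n (P : {set n.-tuple bool}) e : e \in (Phi P).2 ->
  lev e.2 = (lev e.1).+1 /\ lev e.2 <= n.
Proof.
case/PhiE => w [j [_ ->]] /=.
by rewrite !lev_pos ?ltn_ord // ltnW.
Qed.

Lemma in_uniq n (P : {set n.-tuple bool}) e e' : pref P ->
  e \in (Phi P).2 -> e' \in (Phi P).2 -> e.2 = e'.2 -> e = e'.
Proof.
move=> pre /PhiE [w [j [wP ->]]] /PhiE [w' [j' [wP' ->]]] /= h.
have [hps hj] := pos_eq (ltn_ord j) (ltn_ord j') h.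
have jj : j = j' :> nat by case: hj.
rewrite -jj in hps.
have ht := prefE pre wP wP' (ltn_ord j) hps.
have hp := ps_take_eq ht (leqnSn j).
by rewrite !pos_ps hp hps jj.
Qed.
Local Open Scope ring_scope.

Definition fv n (v : vtx n) (e : vtx n * vtx n) : rat := (v == e.2)%:R - (v == e.1)%:R.

Lemma kerP n (H : subgraph n) : (face_dim H = 0)%N <->
  (forall x : 'rV[rat]_#|H.2|, x *m bdry H = 0 -> x = 0).
Proof.
have kA : kermx (bdry H) *m bdry H = 0 by apply/eqP; rewrite -sub_kermx submx_refl.
split.
  move/eqP; rewrite /face_dim mxrank_eq0 => /eqP k0 x hx.
  have : (x <= kermx (bdry H))%MS by rewrite sub_kermx hx eqxx.
  by rewrite k0 submx0 => /eqP.
move=> h; apply/eqP; rewrite /face_dim mxrank_eq0; apply/eqP/matrixP => i j.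
have := h (row i (kermx (bdry H))); rewrite -row_mul kA row0 => /(_ erefl).
by move/matrixP => /(_ 0 j); rewrite !mxE.
Qed.

Lemma mul_bdry n (H : subgraph n) (x : 'rV[rat]_#|H.2|) c :
  (x *m bdry H) 0 c = \sum_(i < #|H.2|) x 0 i * fv (enum_val c) (enum_val i).
Proof. by rewrite !mxE; apply: eq_bigr => i _; rewrite mxE. Qed.

Lemma ker1 n (P : {set n.-tuple bool}) : pref P -> face_dim (Phi P) = 0%N.
Proof.
move=> pre; apply/kerP => x hx.
set H := Phi P.
suff h : forall L (i : 'I_#|H.2|), (n - lev (enum_val i).2 < L)%N -> x 0 i = 0.
  by apply/matrixP => a i; rewrite ord1 mxE; apply: (h n.+1); rewrite ltnS leq_subr.
elim=> // L IH i hL.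
set e := enum_val i.
have eH : e \in H.2 := enum_valP i.
have [hl hn] := PhiE_lev eH.
have eT : e.2 \in {: vtx n} by [].
have hc : forall c, (x *m bdry H) 0 c = 0 by move=> c; rewrite hx mxE.
have := hc (enum_rank_in eT e.2).
rewrite mul_bdry enum_rankK_in // (bigD1 i) // big1 ?addr0.
  rewrite /fv eqxx.
  have -> : (e.2 == e.1) = false.
    by apply/negbTE/eqP => h; move: hl; rewrite h; lia.
  by rewrite /= mulr1n mulr0n subr0 mulr1.
move=> i' ne.
have e'H : enum_val i' \in H.2 := enum_valP i'.
rewrite /fv.
case: (eqVneq e.2 (enum_val i').2) => [h2|h2].
  have := in_uniq pre eH e'H h2 => /enum_val_inj ii.
  by move: ne; rewrite ii eqxx.
case: (eqVneq e.2 (enum_val i').1) => [h1|h1]; last by rewrite subrr mulr0.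
have [hl' hn'] := PhiE_lev e'H.
rewrite (IH i') ?mul0r //.
have h3 : lev (enum_val i').1 = lev e.2 by rewrite h1.
move: hL h3 hl' hn'; rewrite /e; clear; lia.
Qed.

Lemma ker2 n (P : {set n.-tuple bool}) : face_dim (Phi P) = 0%N -> pref P.
Proof.
move=> /kerP hk; apply: prefI => w1 w2 j h1 h2 hj e.
set H := Phi P.
pose E (w : n.-tuple bool) := [set (pos w i, pos w i.+1) | i : 'I_n & (i < j)%N].
pose y (f : vtx n * vtx n) : rat := (f \in E w1)%:R - (f \in E w2)%:R.
pose x : 'rV[rat]_#|H.2| := \row_i y (enum_val i).
have EH : forall w, w \in P -> E w \subset H.2.
  move=> w wP; apply/subsetP => f /imsetP [i _ ->]; apply/bigcupP; exists w => //.
  by apply/imsetP; exists i.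
have sumE : forall w, w \in P -> forall v,
    \sum_(f in H.2) (f \in E w)%:R * fv v f = (v == pos w j)%:R - (v == pos w 0)%:R.
  move=> w wP v.
  rewrite (eq_bigr (fun f => if f \in E w then fv v f else 0)); last first.
    by move=> f _; case: (f \in E w); rewrite ?mul1r ?mul0r.
  rewrite -big_mkcondr.
  rewrite (eq_bigl (mem (E w))); last first.
    by move=> f /=; apply/andP/idP => [[]//|fE]; split=> //; apply: (subsetP (EH w wP)).
  rewrite big_imset /=; last first.
    move=> i i' _ _ /(congr1 fst) /= h; apply: val_inj.
    by have [_ hh] := pos_eq (ltnW (ltn_ord i)) (ltnW (ltn_ord i')) h.
  rewrite (eq_bigl (fun i : 'I_n => (i < j)%N)); last by move=> i; rewrite inE.
  rewrite -(big_ord_widen n (fun i => fv v (pos w i, pos w i.+1))) //.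
  rewrite -(big_mkord xpredT (fun i => fv v (pos w i, pos w i.+1))).
  by apply: (telescope_sumr_eq (fun i => (v == pos w i)%:R)).

have hx : x *m bdry H = 0.
  apply/matrixP => a c; rewrite ord1 mul_bdry mxE.
  under eq_bigr do rewrite mxE.
  rewrite -(big_enum_val (fun f => y f * fv (enum_val c) f)) /y.
  under eq_bigr do rewrite mulrBl.
  rewrite sumrB !sumE // !pos_ps e !ps0.
  by rewrite subrr.
have x0 := hk x hx.
have yE : forall f, f \in H.2 -> y f = 0.
  move=> f fH; have : x 0 (enum_rank_in fH f) = 0 by rewrite x0 mxE.
  by rewrite !mxE enum_rankK_in.
have steps : forall i, (i < j)%N -> ps w1 i.+1 = ps w2 i.+1.
  move=> i hi.
  have hin : (i < n)%N by apply: leq_trans hi hj.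
  have f1 : (pos w1 i, pos w1 i.+1) \in E w1.
    by apply/imsetP; exists (Ordinal hin); rewrite ?inE.
  have : (pos w1 i, pos w1 i.+1) \in E w2.
    have := yE _ (subsetP (EH w1 h1) _ f1); rewrite /y f1.
    by case: (_ \in E w2) => //=; rewrite subr0 => /eqP; rewrite oner_eq0.
  case/imsetP => i' _ /(congr1 snd) /= h.
  have [-> hii] := pos_eq hin (ltn_ord i') h.
  by rewrite hii.
apply: take_eq_ps; rewrite ?size_tuple //.
by move=> [|i] hi; [rewrite !ps0 | apply: steps].
Qed.

Lemma upath n (P : {set n.-tuple bool}) (w w' : n.-tuple bool) : pref P ->
  pathE w' \subset (Phi P).2 -> w \in P -> ps w n = ps w' n -> w = w'.
Proof.
move=> pre sub wP hn.
suff h : forall L, (L <= n)%N -> ps w (n - L) = ps w' (n - L).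
  have ht : take n w = take n w'.
    apply: take_eq_ps; rewrite ?size_tuple //.
    by move=> i hi; have := h (n - i)%N (leq_subr _ _); rewrite subKn.
  apply: val_inj => /=.
  by rewrite -(take_oversize (s := w) (n := n)) ?size_tuple // ht take_oversize ?size_tuple.
elim=> [|L IH] hL; first by rewrite subn0.
have jn : (n - L.+1 < n)%N by lia.
set j := (n - L.+1)%N in jn *.
have j1 : j.+1 = (n - L)%N by rewrite /j; lia.
have : (pos w' j, pos w' j.+1) \in (Phi P).2.
  by apply: (subsetP sub); apply/imsetP; exists (Ordinal jn).
case/PhiE => u [i [uP hh]].
have h0 := congr1 fst hh; have h1 := congr1 snd hh; simpl in h0, h1.
have [hp hij] := pos_eq jn (ltn_ord i) h1.
case: hij => hij; rewrite -hij in h0 hp.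
have hu : ps u j.+1 = ps w j.+1 by rewrite -hp j1 IH // ltnW.
have ht := prefE pre uP wP (ltn_ord (Ordinal jn)) hu.
have [hp0 _] := pos_eq (ltnW jn) (ltnW jn) h0.
by rewrite hp0 (ps_take_eq ht (leqnSn _)).
Qed.
Local Close Scope ring_scope.

Definition tp n (k : seq nat) (l : nat) : nat * nat := (psum k l, n - psum k l).

Definition good n (k : seq nat) (P : {set n.-tuple bool}) : bool :=
  [&& [forall w in P, [exists l : 'I_(size k).+1, ps w n == tp n k l]],
      [forall l : 'I_(size k).+1, [exists w in P, ps w n == tp n k l]] & pref P].

Arguments good : clear implicits.

Definition Ngood n k := #|[set P : {set n.-tuple bool} | good n k P]|.

Lemma psum_le k l : psum k l <= sumn k.
Proof. by rewrite /psum -{2}(cat_take_drop l k) sumn_cat leq_addr. Qed.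

Lemma pospathE k (w : (sumn k).-tuple bool) :
  @pospath k w = [exists l : 'I_(size k).+1, ps w (sumn k) == tp (sumn k) k l].
Proof.
apply/idP/existsP.
  case/imsetP => l _ h; exists l; apply/eqP.
  have /andP[a b] := ps_le w (leqnn (sumn k)).
  have [e1 e2] := pt_inj a b (psum_le k l) (leq_subr _ _) h.
  by rewrite /tp -e2 -e1; case: (ps _ _).
case=> l /eqP h; apply/imsetP; exists l => //.
by rewrite pos_ps h.
Qed.

Lemma good_face k (P : {set (sumn k).-tuple bool}) : good (sumn k) k P ->
  @is_face k (Phi P) && (face_dim (Phi P) == 0%N).
Proof.
case/and3P => h1 h2 h3; rewrite (ker1 h3) eqxx andbT.
apply/existsP; exists P; apply/and3P; split => //.
  by apply/forallP => w; apply/implyP => wP; rewrite pospathE; move/forallP: h1 => /(_ w); rewrite wP.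
apply/subsetP => v /imsetP [l _ ->].
move/forallP: h2 => /(_ l) /existsP [w /andP [wP /eqP hw]].
apply/bigcupP; exists w => //; apply/imsetP; exists ord_max => //.
by rewrite pos_ps (_ : nat_of_ord (@ord_max (sumn k)) = sumn k) // hw.
Qed.

Lemma face_good k (H : subgraph (sumn k)) : @is_face k H -> face_dim H = 0%N ->
  exists P, good (sumn k) k P /\ H = Phi P.
Proof.
case/existsP => P /and3P [h1 /eqP hH h3] hd.
have eH : H = Phi P by [].
exists P; split => //; apply/and3P; split.
- by apply/forallP => w; apply/implyP => wP; rewrite -pospathE; move/forallP: h1 => /(_ w); rewrite wP.
- apply/forallP => l; apply/existsP.
  have : pt (sumn k) (psum k l) (sumn k - psum k l) \in H.1.
    by apply: (subsetP h3); apply/imsetP; exists l.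
  rewrite eH => /bigcupP [w wP /imsetP [j _ hj]].
  exists w; rewrite wP /=.
  have hl := congr1 (@lev _) hj.
  rewrite lev_pos ?leq_ord // in hl.
  have /andP[a b] := ps_le w (leq_ord j).
  rewrite pos_ps in hj.
  have [e1 e2] := pt_inj (psum_le k l) (leq_subr _ _) (leq_trans a (leq_ord j)) (leq_trans b (leq_ord j)) hj.
  have hjn : j = sumn k :> nat.
    rewrite -hl /lev.
    have [-> ->] := pt_val (psum_le k l) (leq_subr (psum k l) (sumn k)).
    by rewrite subnKC // psum_le.
  by rewrite -(congr1 (ps w) hjn) /tp e2 e1; case: (ps _ _).
- by apply: ker2; rewrite -eH.
Qed.

Lemma good_inj_sub n k (P1 P2 : {set n.-tuple bool}) : good n k P1 -> good n k P2 ->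
  Phi P1 = Phi P2 -> P1 \subset P2.
Proof.
case/and3P => a1 b1 c1; case/and3P => a2 b2 c2 e.
apply/subsetP => w wP.
move/forallP: a1 => /(_ w); rewrite wP /= => /existsP [l /eqP hl].
move/forallP: b2 => /(_ l) /existsP [w' /andP [wP' /eqP hl']].
have sub : pathE w' \subset (Phi P1).2.
  rewrite e; apply/subsetP => f fw; apply/bigcupP; by exists w'.
by rewrite (upath c1 sub wP) // hl hl'.
Qed.

Lemma Vcount_good k : Vcount k = Ngood (sumn k) k.
Proof.
rewrite /Vcount /Ngood.
have -> : [set H | @is_face k H && (face_dim H == 0%N)] =
          (@Phi (sumn k)) @: [set P | good (sumn k) k P].
  apply/setP => H; rewrite inE; apply/idP/imsetP.
    case/andP => f /eqP d; have [P [g ->]] := face_good f d.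
    by exists P; rewrite ?inE.
  by case=> P; rewrite inE => g ->; apply: good_face.
apply: card_in_imset => P1 P2; rewrite !inE => g1 g2 e.
by apply/eqP; rewrite eqEsubset !(good_inj_sub g1 g2, good_inj_sub g2 g1).
Qed.

Definition Dd (d : seq bool) (i : nat) : bool := nth false (true :: d) i.

Definition kp (ml : seq nat) (d : seq bool) : seq nat :=
  [seq nth 0 ml i + Dd d i.+1 + ~~ Dd d i | i <- iota 0 (size ml)].

Lemma size_kp ml d : size (kp ml d) = size ml.
Proof. by rewrite size_map size_iota. Qed.

Lemma nth_kp ml d i : i < size ml -> nth 0 (kp ml d) i = nth 0 ml i + Dd d i.+1 + ~~ Dd d i.
Proof. by move=> hi; rewrite (nth_map 0) ?size_iota // nth_iota. Qed.

Lemma psumS k l : l < size k -> psum k l.+1 = psum k l + nth 0 k l.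
Proof. by move=> hl; rewrite /psum (take_nth 0 hl) -cats1 sumn_cat /= addn0. Qed.

Lemma psum_kp ml d l : l <= size ml ->
  psum (kp ml d) l + 1 = psum (map S ml) l + Dd d l.
Proof.
elim: l => [|l IH] hl; first by rewrite /psum !take0.
rewrite psumS ?size_kp // psumS ?size_map // nth_kp // (nth_map 0) //.
have := IH (ltnW hl); case: (Dd d l); case: (Dd d l.+1) => /=; lia.
Qed.

Lemma sumn_kp ml d s : size ml = s.+1 -> size d = s ->
  sumn (kp ml d) + 1 = sumn (map S ml).
Proof.
move=> hm hd; have := psum_kp d (leqnn (size ml)).
rewrite /psum -{1}(size_kp ml d) !take_size -(size_map S ml) take_size.
by rewrite /Dd size_map hm /= nth_default ?hd // addn0.
Qed.

Lemma psum_lt k l l' : all (fun x => 0 < x) k -> l < l' -> l' <= size k -> psum k l < psum k l'.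
Proof.
move=> /allP pos hl; elim: l' hl => // l' IH hl hl'.
rewrite psumS //.
have hp : 0 < nth 0 k l' by apply: pos; apply: mem_nth.
move: hl; rewrite ltnS leq_eqVlt => /orP [/eqP ->|h]; first by lia.
have := IH h (ltnW hl'); lia.
Qed.

Lemma psum_inj k l l' : all (fun x => 0 < x) k -> l <= size k -> l' <= size k ->
  psum k l = psum k l' -> l = l'.
Proof.
move=> pos h1 h2 e; case: (ltngtP l l') => // h.
  by have := psum_lt pos h h2; rewrite e ltnn.
by have := psum_lt pos h h1; rewrite e ltnn.
Qed.

Lemma trunc_size n (w : n.+1.-tuple bool) : size (take n w) == n.
Proof. by rewrite size_takel ?size_tuple. Qed.

Definition trunc n (w : n.+1.-tuple bool) : n.-tuple bool := Tuple (trunc_size w).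

Lemma trunc_val n (w : n.+1.-tuple bool) : val (trunc w) = take n w.
Proof. by []. Qed.

Lemma ext_size n (w : n.-tuple bool) (b : bool) : size (rcons w b) == n.+1.
Proof. by rewrite size_rcons size_tuple. Qed.

Definition ext1 n (w : n.-tuple bool) b : n.+1.-tuple bool := Tuple (ext_size w b).

Lemma trunc_ext1 n (w : n.-tuple bool) b : trunc (ext1 w b) = w.
Proof.
apply: val_inj; rewrite trunc_val /= -cats1 takel_cat ?size_tuple //.
by rewrite take_oversize ?size_tuple.
Qed.

Lemma nth_ext1 n (w : n.-tuple bool) b : nth false (ext1 w b) n = b.
Proof. by rewrite /= nth_rcons size_tuple ltnn eqxx. Qed.

Lemma tuple_split n (w : n.+1.-tuple bool) : w = ext1 (trunc w) (nth false w n).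
Proof.
apply: val_inj => /=.
by rewrite -take_nth ?size_tuple // take_oversize ?size_tuple.
Qed.

Lemma ps_trunc n (w : n.+1.-tuple bool) j : j <= n -> ps (trunc w) j = ps w j.
Proof. by move=> hj; rewrite trunc_val ps_take. Qed.

Lemma ps_last n (w : n.+1.-tuple bool) :
  ps w n.+1 = if nth false w n then ((ps (trunc w) n).1, (ps (trunc w) n).2.+1)
              else ((ps (trunc w) n).1.+1, (ps (trunc w) n).2).
Proof. by rewrite ps_trunc // ps_step // size_tuple. Qed.

Lemma goodE1 m K (P : {set m.-tuple bool}) w : good m K P -> w \in P ->
  exists l, l <= size K /\ ps w m = tp m K l.
Proof.
case/and3P => /forallP /(_ w) h _ _ wP; move: h; rewrite wP /= => /existsP [l /eqP e].
by exists l; rewrite -ltnS ltn_ord.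
Qed.

Lemma goodE2 m K (P : {set m.-tuple bool}) l : good m K P -> l <= size K ->
  exists2 w, w \in P & ps w m = tp m K l.
Proof.
case/and3P => _ /forallP /(_ (Ordinal (n := (size K).+1) (m := l) _)) h _ hl.
by have /existsP [w /andP [wP /eqP e]] := h hl; exists w.
Qed.

Lemma goodE3 m K (P : {set m.-tuple bool}) : good m K P -> pref P.
Proof. by case/and3P. Qed.

Lemma goodI m K (P : {set m.-tuple bool}) :
  (forall w, w \in P -> exists l, l <= size K /\ ps w m = tp m K l) ->
  (forall l, l <= size K -> exists2 w, w \in P & ps w m = tp m K l) ->
  pref P -> good m K P.
Proof.
move=> h1 h2 h3; apply/and3P; split => //.
  apply/forallP => w; apply/implyP => wP; have [l [hl e]] := h1 w wP.
  by apply/existsP; exists (Ordinal (n := (size K).+1) (m := l) hl); rewrite /= e.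
apply/forallP => l; have [w wP e] := h2 l (leq_ord l).
by apply/existsP; exists w; rewrite wP e eqxx.
Qed.

Lemma pref_end m (P : {set m.-tuple bool}) w w' : pref P -> w \in P -> w' \in P ->
  ps w m = ps w' m -> w = w'.
Proof.
move=> pre wP wP' e; have := prefE pre wP wP' (leqnn m) e.
by rewrite !take_oversize ?size_tuple // => /val_inj.
Qed.

Definition dof n (k : seq nat) s (P : {set n.+1.-tuple bool}) : seq bool :=
  [seq [exists w in P, (ps w n.+1 == tp n.+1 k i.+1) && nth false w n] | i <- iota 0 s].

Definition extS n (k : seq nat) (d : seq bool) (P' : {set n.-tuple bool}) : {set n.+1.-tuple bool} :=
  [set w | (trunc w \in P') &&
     [exists l : 'I_(size k).+1, (ps w n.+1 == tp n.+1 k l) && (nth false w n == Dd d l)]].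

Definition truncS n (P : {set n.+1.-tuple bool}) : {set n.-tuple bool} := [set trunc w | w in P].

Lemma size_dof n k s P : size (@dof n k s P) = s.
Proof. by rewrite size_map size_iota. Qed.

Lemma parent ml s n d l (w : n.+1.-tuple bool) : size ml = s.+1 -> sumn (map S ml) = n.+1 ->
  l <= s.+1 -> ps w n.+1 = tp n.+1 (map S ml) l -> nth false w n = Dd d l ->
  ps (trunc w) n = tp n (kp ml d) l.
Proof.
move=> hm hn hl; have e := psum_kp (ml := ml) d (l := l); rewrite hm in e; have {}e := e hl.
have le := psum_le (map S ml) l; rewrite hn in le.
rewrite ps_last /tp; case: (ps (trunc w) n) => a c /=.
case: (nth false w n) => /= -[e1 e2] hb; move: e; rewrite -hb /= => e; f_equal; lia.
Qed.

Lemma child ml s n d l (w : n.-tuple bool) : size ml = s.+1 -> sumn (map S ml) = n.+1 ->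
  size d = s -> l <= s.+1 -> ps w n = tp n (kp ml d) l ->
  ps (ext1 w (Dd d l)) n.+1 = tp n.+1 (map S ml) l.
Proof.
move=> hm hn hd hl; have e := psum_kp (ml := ml) d (l := l); rewrite hm in e; have {}e := e hl.
have le := psum_le (kp ml d) l; have := sumn_kp hm hd; rewrite hn => hs.
have le2 := psum_le (map S ml) l; rewrite hn in le2.
rewrite ps_last trunc_ext1 nth_ext1 /tp => ->; move: e.
case: (Dd d l) => /= e; f_equal; lia.
Qed.

Lemma forced0 ml n (w : n.+1.-tuple bool) :
  ps w n.+1 = tp n.+1 (map S ml) 0 -> nth false w n = true.
Proof.
rewrite ps_last /tp /psum take0 /=.
by case: (nth false w n) => // -[].
Qed.

Lemma forcedS ml s n (w : n.+1.-tuple bool) : size ml = s.+1 -> sumn (map S ml) = n.+1 ->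
  ps w n.+1 = tp n.+1 (map S ml) s.+1 -> nth false w n = false.
Proof.
move=> hm hn; rewrite ps_last /tp /psum -hm -(size_map S) take_size hn subnn.
by case: (nth false w n) => // -[].
Qed.

Lemma Dd_end d s : size d = s -> Dd d s.+1 = false.
Proof. by move=> hd; rewrite /Dd /= nth_default ?hd. Qed.

Lemma key1 ml s n (P : {set n.+1.-tuple bool}) w l :
  size ml = s.+1 -> sumn (map S ml) = n.+1 -> good n.+1 (map S ml) P ->
  w \in P -> l <= s.+1 -> ps w n.+1 = tp n.+1 (map S ml) l ->
  nth false w n = Dd (dof (map S ml) s P) l.
Proof.
move=> hm hn g wP hl e.
case: l hl e => [|l] hl e; first by rewrite (forced0 e).
move: hl; rewrite leq_eqVlt => /orP [/eqP [hl]|hl].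
  by rewrite (forcedS hm hn) -?hl // Dd_end // size_dof.
rewrite /Dd /= (nth_map 0) ?size_iota // nth_iota // add0n.
case hb: (nth false w n).
  by apply/esym/existsP; exists w; rewrite wP e eqxx hb.
apply/esym/negbTE/existsP => -[w' /and3P [wP' /eqP e' hb']].
have := pref_end (goodE3 g) wP wP'; rewrite e e' => /(_ erefl) ww.
by move: hb; rewrite ww hb'.
Qed.

Lemma extE n k d (P' : {set n.-tuple bool}) w : w \in extS k d P' ->
  trunc w \in P' /\ exists l, l <= size k /\ ps w n.+1 = tp n.+1 k l /\ nth false w n = Dd d l.
Proof.
rewrite inE => /andP [h /existsP [l /andP [/eqP e1 /eqP e2]]]; split => //.
by exists l; rewrite -ltnS ltn_ord.
Qed.

Lemma extI n k d (P' : {set n.-tuple bool}) w l : trunc w \in P' -> l <= size k ->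
  ps w n.+1 = tp n.+1 k l -> nth false w n = Dd d l -> w \in extS k d P'.
Proof.
move=> h hl e1 e2; rewrite inE h /=; apply/existsP.
by exists (Ordinal (n := (size k).+1) (m := l) hl); rewrite /= e1 e2 !eqxx.
Qed.

Lemma allpos ml : all (fun x => 0 < x) (map S ml).
Proof. by apply/allP => x /mapP [y _ ->]. Qed.

Lemma trunc_good ml s n (P : {set n.+1.-tuple bool}) :
  size ml = s.+1 -> sumn (map S ml) = n.+1 -> good n.+1 (map S ml) P ->
  good n (kp ml (dof (map S ml) s P)) (truncS P).
Proof.
move=> hm hn g; have hk : size (map S ml) = s.+1 by rewrite size_map.
apply: goodI.
- move=> w' /imsetP [w wP ->]; have [l [hl e]] := goodE1 g wP.
  exists l; rewrite size_kp -(size_map S) ; split => //.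
  by apply: (parent hm hn) => //; [rewrite -hk | apply: (key1 hm hn g wP) => //; rewrite -hk].
- move=> l; rewrite size_kp -(size_map S) => hl; have [w wP e] := goodE2 g hl.
  exists (trunc w); first by apply: imset_f.
  by apply: (parent hm hn) => //; [rewrite -hk | apply: (key1 hm hn g wP) => //; rewrite -hk].
- apply: prefI => w1' w2' j /imsetP [w1 h1 ->] /imsetP [w2 h2 ->] hj.
  rewrite !ps_trunc // => e.
  have := prefE (goodE3 g) h1 h2 (leqW hj) e.
  by rewrite !trunc_val !take_takel // => ->.
Qed.

Lemma ext_good ml s n d (P' : {set n.-tuple bool}) :
  size ml = s.+1 -> sumn (map S ml) = n.+1 -> size d = s -> good n (kp ml d) P' ->
  good n.+1 (map S ml) (extS (map S ml) d P').
Proof.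
move=> hm hn hd g; have hk : size (map S ml) = s.+1 by rewrite size_map.
apply: goodI.
- by move=> w /extE [_ [l [hl [e _]]]]; exists l.
- move=> l hl; have hl' : l <= size (kp ml d) by rewrite size_kp -(size_map S).
  have [w' wP e] := goodE2 g hl'.
  have e2 := child hm hn hd (leq_trans hl (eq_leq hk)) e.
  exists (ext1 w' (Dd d l)) => //.
  by apply: (extI (l := l)); rewrite ?trunc_ext1 ?nth_ext1.
- apply: prefI => w1 w2 j h1 h2 hj e.
  move: hj; rewrite leq_eqVlt => /orP [/eqP hj|hj].
    subst j.
    have [t1 [l1 [hl1 [e1 f1]]]] := extE h1; have [t2 [l2 [hl2 [e2 f2]]]] := extE h2.
    have ll : l1 = l2.
      move: e; rewrite e1 e2 => -[ee _].
      exact: psum_inj (allpos ml) hl1 hl2 ee.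
    subst l2.
    have p1 := parent hm hn (leq_trans hl1 (eq_leq hk)) e1 f1.
    have p2 := parent hm hn (leq_trans hl2 (eq_leq hk)) e2 f2.
    have tt := pref_end (goodE3 g) t1 t2; rewrite p1 p2 in tt; have {}tt := tt erefl.
    by rewrite (tuple_split w1) (tuple_split w2) tt f1 f2.
  have [t1 _] := extE h1; have [t2 _] := extE h2.
  rewrite ltnS in hj.
  move: e; rewrite -!(ps_trunc _ hj) => e.
  have := prefE (goodE3 g) t1 t2 hj e.
  by rewrite !trunc_val !take_takel.
Qed.

Lemma ext_last ml n d (P' : {set n.-tuple bool}) w l :
  w \in extS (map S ml) d P' -> l <= size (map S ml) ->
  ps w n.+1 = tp n.+1 (map S ml) l -> nth false w n = Dd d l.
Proof.
move=> /extE [_ [l' [hl' [e1 f1]]]] hl e.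
have ll : l' = l.
  move: e; rewrite e1 => -[ee _]; exact: psum_inj (allpos ml) hl' hl ee.
by rewrite -ll.
Qed.

Lemma dof_ext ml s n d (P' : {set n.-tuple bool}) :
  size ml = s.+1 -> sumn (map S ml) = n.+1 -> size d = s -> good n (kp ml d) P' ->
  dof (map S ml) s (extS (map S ml) d P') = d.
Proof.
move=> hm hn hd g; have hk : size (map S ml) = s.+1 by rewrite size_map.
have g2 := ext_good hm hn hd g.
apply: (eq_from_nth (x0 := false)); first by rewrite size_dof hd.
move=> i; rewrite size_dof => hi.
rewrite (nth_map 0) ?size_iota // nth_iota // add0n.
have hl : i.+1 <= size (map S ml) by rewrite hk ltnS ltnW.
have -> : nth false d i = Dd d i.+1 by [].
case hb: (Dd d i.+1).
  have [w wP e] := goodE2 g2 hl.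
  by apply/existsP; exists w; rewrite wP e eqxx (ext_last wP hl e) hb.
apply/negbTE/existsP => -[w /and3P [wP /eqP e hw]].
by move: hw; rewrite (ext_last wP hl e) hb.
Qed.

Lemma trunc_ext ml s n d (P' : {set n.-tuple bool}) :
  size ml = s.+1 -> sumn (map S ml) = n.+1 -> size d = s -> good n (kp ml d) P' ->
  truncS (extS (map S ml) d P') = P'.
Proof.
move=> hm hn hd g; have hk : size (map S ml) = s.+1 by rewrite size_map.
apply/setP => w'; apply/imsetP/idP => [[w /extE [h _] ->] //|wP].
have [l [hl e]] := goodE1 g wP.
rewrite size_kp hm in hl.
exists (ext1 w' (Dd d l)); last by rewrite trunc_ext1.
apply: (extI (l := l)); rewrite ?trunc_ext1 ?nth_ext1 ?hk //.
exact: child hm hn hd hl e.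
Qed.

Lemma ext_trunc ml s n (P : {set n.+1.-tuple bool}) :
  size ml = s.+1 -> sumn (map S ml) = n.+1 -> good n.+1 (map S ml) P ->
  extS (map S ml) (dof (map S ml) s P) (truncS P) = P.
Proof.
move=> hm hn g; have hk : size (map S ml) = s.+1 by rewrite size_map.
apply/setP => w; apply/idP/idP => [wE|wP].
  have [/imsetP [w0 w0P tw] [l [hl [e f]]]] := extE wE.
  have [wl wlP el] := goodE2 g hl.
  have fl := key1 hm hn g wlP (leq_trans hl (eq_leq hk)) el.
  have p1 := parent hm hn (leq_trans hl (eq_leq hk)) e f.
  have p2 := parent hm hn (leq_trans hl (eq_leq hk)) el fl.
  have ht : take n wl = take n w0.
    apply: (prefE (goodE3 g) wlP w0P (leqnSn n)).
    by rewrite -!ps_trunc // -tw p1 p2.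
  have twl : trunc wl = trunc w by rewrite tw; apply: val_inj; rewrite !trunc_val.
  by rewrite (tuple_split w) -twl f -fl -tuple_split.
have [l [hl e]] := goodE1 g wP.
apply: (extI (l := l)) => //; first by apply: imset_f.
by apply: (key1 hm hn g wP) => //; rewrite -hk.
Qed.

Fixpoint allb (s : nat) : seq (seq bool) :=
  if s is s'.+1 then [seq true :: b | b <- allb s'] ++ [seq false :: b | b <- allb s']
  else [:: [::]].

Lemma mem_allb s b : (b \in allb s) = (size b == s).
Proof.
elim: s b => [|s IH] b; first by case: b.
case: b => [|x b] /=; rewrite mem_cat.
  by apply/negbTE/orP => -[] /mapP [? _ //].
rewrite eqSS -IH; case: x.
    rewrite mem_map; last by move=> ? ? [].
    by apply/orP/idP => [[//|/mapP [] //]|->]; left.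
  rewrite (mem_map (f := cons false)); last by move=> ? ? [].
  by apply/orP/idP => [[/mapP [] //|//]|->]; right.
Qed.

Lemma uniq_allb s : uniq (allb s).
Proof.
elim: s => //= s IH; rewrite cat_uniq !map_inj_uniq //; try by move=> ? ? [].
rewrite IH /= andbT; apply/hasPn => b /mapP [c _ ->] /=; apply/mapP => -[e _] //.
Qed.

Lemma sum_eq_count (T : eqType) (r : seq T) x : \sum_(d <- r) (x == d) = count_mem x r.
Proof. by elim: r => [|y r IH]; rewrite ?big_nil ?big_cons ?IH //= eq_sym. Qed.

Lemma card_partition (T : finType) (A : {set T}) (f : T -> seq bool) s :
  (forall x, x \in A -> size (f x) = s) ->
  #|A| = \sum_(d <- allb s) #|[set x in A | f x == d]|.
Proof.
move=> hs.
have hc : forall d, #|[set x in A | f x == d]| = \sum_(x in A) (f x == d).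
  move=> d; rewrite -sum1_card big_mkcond [RHS]big_mkcond /=.
  by apply: eq_bigr => x _; rewrite !inE; case: (x \in A); case: (f x == d).
rewrite (eq_bigr _ (fun d _ => hc d)) exchange_big /= -sum1_card; apply: eq_bigr => x xA.
by rewrite sum_eq_count count_uniq_mem ?uniq_allb // mem_allb hs // eqxx.
Qed.

Lemma rec ml s n : size ml = s.+1 -> sumn (map S ml) = n.+1 ->
  Ngood n.+1 (map S ml) = \sum_(d <- allb s) Ngood n (kp ml d).
Proof.
move=> hm hn.
rewrite /Ngood (card_partition (f := dof (map S ml) s) (s := s)); last by move=> x _; rewrite size_dof.
apply: eq_big_seq => d; rewrite mem_allb => /eqP hd.
set A := [set x in _ | _].
have -> : [set P' : {set n.-tuple bool} | good n (kp ml d) P'] = (@truncS n) @: A.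
  apply/setP => P'; rewrite inE; apply/idP/imsetP => [g|[P]].
    exists (extS (map S ml) d P'); last by rewrite (trunc_ext hm hn hd g).
    by rewrite !inE (ext_good hm hn hd g) (dof_ext hm hn hd g) eqxx.
  rewrite !inE => /andP [g /eqP dP] ->.
  by rewrite -dP; apply: trunc_good.
rewrite card_in_imset // => P1 P2; rewrite !inE => /andP [g1 /eqP d1] /andP [g2 /eqP d2] e.
by rewrite -(ext_trunc hm hn g1) -(ext_trunc hm hn g2) e d1 d2.
Qed.

Lemma CT ml s : size ml = s.+1 ->
  Vcount (map S ml) = \sum_(d <- allb s) Vcount (kp ml d).
Proof.
move=> hm.
have hpos : 0 < sumn (map S ml) by case: ml hm => //= x ml _; rewrite addSn.
set n := (sumn (map S ml)).-1.
have hn : sumn (map S ml) = n.+1 by rewrite /n prednK.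
rewrite Vcount_good hn (rec hm hn); apply: eq_big_seq => d; rewrite mem_allb => /eqP hd.
rewrite Vcount_good.
have hs : sumn (kp ml d) = n by have := sumn_kp hm hd; rewrite hn addn1 => -[].
by rewrite hs.
Qed.

Definition fct t (m : mindex t) : nat := \prod_(i < t) (m i)`!.

Lemma fct_gt0 t (m : mindex t) : 0 < fct m.
Proof. by rewrite /fct prodn_gt0 // => i; rewrite fact_gt0. Qed.

Lemma fct_incr t (m : mindex t) i : fct (incr m i) = (fct m * (m i).+1)%N.
Proof.
rewrite /fct (bigD1 i) // [X in _ = X * _](bigD1 i) //= ffunE eqxx addn1 factS.
rewrite (eq_bigr (fun j => (m j)`!)); last by move=> j /negbTE hj; rewrite ffunE hj addn0.
by rewrite -mulnA mulnC.
Qed.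

Local Open Scope ring_scope.

Definition ser t (W : mindex t -> rat) : series t := fun m => W m / (fct m)%:R.

Lemma pderiv_ser t i (W : mindex t -> rat) : pderiv i (ser W) = ser (fun m => W (incr m i)).
Proof.
apply: functional_extensionality => m; rewrite /pderiv /ser fct_incr natrM.
have h1 : (fct m)%:R != 0 :> rat by rewrite pnatr_eq0 -lt0n fct_gt0.
have h2 : ((m i).+1)%:R != 0 :> rat by rewrite pnatr_eq0.
have h3 : 1 + (m i)%:R != 0 :> rat by rewrite addrC natr1.
field; by rewrite h1 h3.
Qed.

Lemma sadd_ser t (A B : mindex t -> rat) : sadd (ser A) (ser B) = ser (fun m => A m + B m).
Proof. by apply: functional_extensionality => m; rewrite /sadd /ser mulrDl. Qed.

Lemma foldr_pderiv t (W : mindex t -> rat) r :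
  foldr (@pderiv t) (ser W) r = ser (fun m => W (foldl (@incr t) m r)).
Proof. by elim: r W => //= i r IH W; rewrite IH pderiv_ser. Qed.

Definition OpW s (W : mindex s.+1 -> rat) (r : seq 'I_s) : mindex s.+1 -> rat :=
  foldr (fun i G m => G (incr m (widen_ord (leqnSn s) i)) + G (incr m (lift ord0 i))) W r.

Lemma foldr_Dprod s (W : mindex s.+1 -> rat) r :
  foldr (fun (i : 'I_s) g =>
           sadd (pderiv (widen_ord (leqnSn s) i) g) (pderiv (lift ord0 i) g)) (ser W) r
  = ser (OpW W r).
Proof. by elim: r => //= i r ->; rewrite !pderiv_ser sadd_ser. Qed.

Definition pick s (r : seq 'I_s) (b : seq bool) : seq 'I_s.+1 :=
  [seq (if x.2 then widen_ord (leqnSn s) x.1 else lift ord0 x.1) | x <- zip r b].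

Lemma OpW_sum s (W : mindex s.+1 -> rat) r m :
  OpW W r m = \sum_(b <- allb (size r)) W (foldl (@incr _) m (pick r b)).
Proof.
elim: r m => [|i r IH] m /=; first by rewrite big_cons big_nil addr0.
by rewrite !IH big_cat !big_map.
Qed.

Local Close Scope ring_scope.

Lemma foldl_incr t (m : mindex t) r : foldl (@incr t) m r = [ffun j => m j + count_mem j r].
Proof.
elim: r m => [|i r IH] m /=; first by apply/ffunP => j; rewrite ffunE addn0.
by rewrite IH; apply/ffunP => j; rewrite !ffunE addnA eq_sym.
Qed.

Lemma pick_val s (r : seq 'I_s) b :
  map val (pick r b) = [seq (if x.2 then x.1 else x.1.+1) | x <- zip (map val r) b].
Proof. by elim: r b => [|i r IH] [|c b] //=; rewrite IH; case: c. Qed.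

Lemma count_zip x a L b : size b = L ->
  count (pred1 x) [seq (if y.2 then y.1 else y.1.+1) | y <- zip (iota a L) b] =
  ([&& a <= x, x < a + L & nth false b (x - a)] + [&& a < x, x <= a + L & ~~ nth false b (x - a).-1])%N.
Proof.
elim: L a b => [|L IH] a [|c b] //= hb.
  by rewrite addn0; case: (ltngtP a x) => //= h; rewrite ?(ltnNge x a) ?ltnW // ?leqNgt ?h ?andbF.
case: hb => hb; rewrite IH //.
case: (ltngtP x a) => h.
- move: (nth false b (x - a.+1)) (nth false b (x - a.+1).-1)
    (nth false (c :: b) (x - a)) (nth false (c :: b) (x - a).-1) => n1 n2 n3 n4.
  by case: c n1 n2 n3 n4 => [] [] [] [] []; lia.
- have -> : x - a = (x - a.+1).+1 by lia.
  rewrite /=.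
  case: (ltngtP x a.+1) => h'; first by lia.
    have -> : x - a.+1 = (x - a.+2).+1 by lia.
    rewrite /=.
    move: (nth false b (x - a.+2).+1) (nth false b (x - a.+2)) => n1 n2.
    by case: c n1 n2 => [] [] []; lia.
  subst x; rewrite subnn /=.
  move: (nth false b 0) => n1.
  by case: c n1 => [] []; lia.
- subst x; rewrite subnn /=.
  move: (nth false b (a - a.+1)) (nth false b (a - a.+1).-1) => n1 n2.
  by case: c n1 n2 => [] [] []; lia.
Qed.

Lemma nth_enum_ordE t (i : nat) (hi : i < t.+1) :
  nth ord0 (enum 'I_t.+1) i = Ordinal hi.
Proof. by apply: val_inj; rewrite /= nth_enum_ord. Qed.

Lemma nth_enum_ordF t (i : nat) (hi : i < t.+1) :
  nth ord0 (Finite.enum 'I_t.+1) i = Ordinal hi.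
Proof. by rewrite -enumT nth_enum_ordE. Qed.

Lemma count_pick s (b : seq bool) (j : 'I_s.+1) : size b = s ->
  count_mem j (pick (enum 'I_s) b) = (nth false b j + [&& 0 < j & ~~ nth false b (j : nat).-1])%N.
Proof.
move=> hb.
have -> : count_mem j (pick (enum 'I_s) b) = count (pred1 (val j)) (map val (pick (enum 'I_s) b)).
  by elim: (pick _ _) => //= x l ->; rewrite -val_eqE.
rewrite pick_val val_enum_ord count_zip // subn0 add0n /=.
have hj := ltn_ord j; rewrite ltnS in hj.
rewrite hj /=; congr (_ + _)%N.
case: (ltngtP j s) => h /=; first by [].
  by move: hj; rewrite leqNgt h.
by rewrite h nth_default ?hb.
Qed.

Lemma list_eq s (m : mindex s.+1) b : size b = s ->
  [seq (foldl (@incr _) m (pick (enum 'I_s) b)) j | j <- enum 'I_s.+1] =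
  kp [seq m i | i <- enum 'I_s.+1] b.
Proof.
move=> hb; apply: (eq_from_nth (x0 := 0)).
  by rewrite size_kp !size_map.
move=> i; rewrite size_map size_enum_ord => hi.
rewrite nth_kp ?size_map ?size_enum_ord //.
rewrite !(nth_map ord0) ?size_enum_ord //.
set o := nth ord0 _ i; have ho : o = Ordinal hi := nth_enum_ordF hi.
rewrite ho foldl_incr ffunE count_pick //.
rewrite /Dd /= -addnA; congr (_ + _)%N.
  clear ho o; by case: i hi => [|i] hi //=.
all: have hsz : size (enum 'I_s.+1) = s.+1 by rewrite size_enum_ord.
all: by rewrite -enumT hsz.
Qed.

Local Open Scope ring_scope.

Theorem corollary1p3 (s : nat) (m : mindex s.+1) :
  Dall (@Eseries s.+1) m - Dprod (@Eseries s.+1) m = 0.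
Proof.
pose V := fun m' : mindex s.+1 => (Vcount [seq m' i | i <- enum 'I_s.+1])%:R : rat.
have -> : @Eseries s.+1 = ser V by [].
rewrite /Dall /Dprod foldr_pderiv foldr_Dprod /ser OpW_sum size_enum_ord.
apply/eqP; rewrite subr_eq0; apply/eqP; congr (_ / _).
rewrite /V -natr_sum; congr (_%:R).
have -> : [seq (foldl (@incr _) m (enum 'I_s.+1)) i | i <- enum 'I_s.+1] =
          map S [seq m i | i <- enum 'I_s.+1].
  rewrite -map_comp; apply: eq_map => i /=.
  by rewrite foldl_incr ffunE count_uniq_mem ?enum_uniq // mem_enum addn1.
rewrite (@CT _ s) ?size_map ?size_enum_ord //.
apply: eq_big_seq => d; rewrite mem_allb => /eqP hd.
by rewrite list_eq.
by rewrite -enumT size_enum_ord.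
Qed.
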